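(* Consider CRANE run for $K$ iterations with $\beta=c\log(\mathcal{N}_{\mathcal{F}}(\epsilon_{\mathrm b})KH|\mathcal{U}_A|/\delta)$, $\epsilon_{\mathrm b}=1/(KH|\mathcal{U}_A|)$, $\delta\in(0,1]$ and $c$ a suitable absolute constant, on a model class $\mathcal{F}$ containing the true model $f^*$. Then with probability at least $1-\delta/2$, $f^*\in\mathcal{B}^k$ for all $k\in[K]$.
   Context: Process: finite observation space $\mathcal{O}$, finite action space $\mathcal{A}$, horizon $H$; histories $\tau_h=(o_1,a_1,\dots,o_h,a_h)$; policies pick $a_h\sim\pi_h(\cdot\mid\tau_{h-1},o_h)$; reward $r_h(o_h,a_h)$; $V^\pi_f$ is the expected total reward of $\pi$ in model $f$ and $\mathbb{P}^\pi_f(\tau_H)$ the probability of $\tau_H$ under $\pi$ in $f$. $\mathcal{U}_h$ ($h\in[H]$) are given sets of tests (sequences of future observations and actions starting at step $h$) and $\mathcal{U}_{A,h}$ is the set of action sequences occurring in $\mathcal{U}_h$, $|\mathcal{U}_A|=\max_h|\mathcal{U}_{A,h}|$. $\mathcal{F}$ is a class of models (each giving valid trajectory distributions $\mathbb{P}^\pi_f$ for every $\pi$). Bracket number: a size-$N$ $\epsilon$-bracket of $\mathcal{F}$ is $\{(g_1^i,g_2^i)\}_{i=1}^N$ of functions of (policy, trajectory $\tau_H$) with $\sum_{\tau_H}|g_1^i(\pi,\tau_H)-g_2^i(\pi,\tau_H)|\le\epsilon$ for all $\pi,i$, such that each $f\in\mathcal{F}$ has some $i$ with $g_1^i(\pi,\tau_H)\le\mathbb{P}^\pi_f(\tau_H)\le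 g_2^i(\pi,\tau_H)$ for all $\tau_H,\pi$; $\mathcal{N}_{\mathcal{F}}(\epsilon)$ is the minimal $N$. Algorithm CRANE (input $\beta$): $\mathcal{B}^1=\mathcal{F}$, $\mathcal{D}=\emptyset$. For $k=1,\dots,K$: choose $(f^k,\pi^k)\in\arg\max_{f\in\mathcal{B}^k,\pi}V^\pi_f$; for each $h\in\{0,\dots,H-1\}$ and $u_a\in\mathcal{U}_{A,h+1}$, execute the policy that follows $\pi^k$ at steps $1,\dots,h-1$, a uniformly random action at step $h$ (if $h\ge1$), the actions of $u_a$ from step $h+1$, and uniform actions afterwards, adding (this policy, collected $\tau_H$) to $\mathcal{D}$; then $\mathcal{B}^{k+1}=\{f\in\mathcal{F}:\sum_{(\pi,\tau_H)\in\mathcal{D}}\log\mathbb{P}^\pi_f(\tau_H)\ge\max_{f'\in\mathcal{F}}\sum_{(\pi,\tau_H)\in\mathcal{D}}\log\mathbb{P}^\pi_{f'}(\tau_H)-\beta\}$. *)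

(* Defs.v *)
From HB Require Import structures.
From mathcomp Require Import all_boot all_order all_algebra.
From mathcomp Require Import all_classical all_reals.
From mathcomp Require Import ereal exp.
Set Implicit Arguments. Unset Strict Implicit. Unset Printing Implicit Defensive.
Import Order.TTheory GRing.Theory Num.Theory.
Local Open Scope ring_scope.
Local Open Scope classical_set_scope.

Section Crane.
Context {R : realType} {O A : finType} (H : nat).

(* histories tau_{h-1} = (o_1,a_1,...,o_{h-1},a_{h-1}) are sequences of pairs *)
Definition history := seq (O * A).
Definition traj := (H.-tuple (O * A))%type.

(* a model: the conditional law of o_h given the history tau_{h-1} *)
Definition model := history -> O -> R.
Definition valid_model (f : model) : Prop :=
  forall hst, (forall o, 0 <= f hst o) /\ \sum_(o : O) f hst o = 1.

(* a (general, history dependent, randomized) policy: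
   pi hst o a = pi_h(a | tau_{h-1} = hst, o_h = o), with h = size hst + 1 *)
Definition policy := history -> O -> A -> R.
Definition valid_policy (p : policy) : Prop :=
  forall hst o, (forall a, 0 <= p hst o a) /\ \sum_(a : A) p hst o a = 1.

Definition traj_prob (f : model) (p : policy) (t : traj) : R :=
  \prod_(i < H) (f (take i t) (tnth t i).1 * p (take i t) (tnth t i).1 (tnth t i).2).

(* V^pi_f, with reward r h o a = r_h(o,a), steps h = 1..H *)
Definition value (r : nat -> O -> A -> R) (f : model) (p : policy) : R :=
  \sum_(t : traj) traj_prob f p t * \sum_(i < H) r i.+1 (tnth t i).1 (tnth t i).2.

Definition unif (a : A) : R := (#|A|%:R)^-1.

(* the exploration policy of CRANE for h and action sequence u:
   pi^k at steps t <= h-1, uniform at step h (if h >= 1), the actions of u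
   at steps h+1, ..., h+|u|, uniform afterwards. *)
Definition explore (p : policy) (h : nat) (u : seq A) : policy :=
  fun hst o a =>
    let t := (size hst).+1 in
    if (t < h)%N then p hst o a
    else if t == h then unif a
    else if (t <= h + size u)%N then (if a == nth a u (t - h).-1 then 1 else 0)
    else unif a.

(* UA h = U_{A,h}; exploration policies of one iteration, for h = 0..H-1 and
   u in U_{A,h+1} *)
Definition explore_list (UA : nat -> seq (seq A)) (p : policy) : seq policy :=
  [seq explore p h u | h <- iota 0 H, u <- UA h.+1].

Definition dataset := seq (policy * traj).

Definition eln (x : R) : \bar R := if 0 < x then (ln x)%:E else -oo%E.

Definition loglik (f : model) (D : dataset) : \bar R :=
  (\sum_(d <- D) eln (traj_prob f d.1 d.2))%E.

(* B^{k+1} computed from the dataset D (the max over F read as a sup) *)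
Definition mleB (F : set model) (beta : R) (D : dataset) : set model :=
  [set f | F f /\ (ereal_sup [set loglik g D | g in F] - beta%:E <= loglik f D)%E].

Definition is_argmax (r : nat -> O -> A -> R) (B : set model) (fp : model * policy) : Prop :=
  B fp.1 /\ valid_policy fp.2 /\
  forall f p, B f -> valid_policy p -> value r f p <= value r fp.1 fp.2.

(* sequential sampling of one trajectory per policy in ps from the true model fs,
   appending (policy, trajectory) to D; returns the expectation of cont *)
Fixpoint episodes (fs : model) (ps : seq policy) (D : dataset)
    (cont : dataset -> R) : R :=
  match ps with
  | [::] => cont D
  | p :: ps' => \sum_(t : traj) traj_prob fs p t * episodes fs ps' (rcons D (p, t)) cont
  end.

(* pgood k B D: probability, for the remaining k iterations of CRANE started with
   current confidence set B and dataset D, that fs belongs to every confidence set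
   used in these iterations.  sel chooses (f^k, pi^k) from the confidence set. *)
Fixpoint pgood (fs : model) (F : set model) (beta : R) (UA : nat -> seq (seq A))
    (sel : set model -> model * policy) (k : nat) (B : set model) (D : dataset) : R :=
  match k with
  | 0 => 1
  | k'.+1 =>
      if `[< B fs >] then
        episodes fs (explore_list UA (sel B).2) D
          (fun D' => pgood fs F beta UA sel k' (mleB F beta D') D')
      else 0
  end.

Definition has_bracket (F : set model) (eps : R) (N : nat) : Prop :=
  exists g1 g2 : 'I_N -> policy -> traj -> R,
    (forall i p, valid_policy p -> \sum_(t : traj) `|g1 i p t - g2 i p t| <= eps) /\
    (forall f, F f -> exists i : 'I_N, forall p t, valid_policy p ->
        g1 i p t <= traj_prob f p t <= g2 i p t).

Definition bracket_number (F : set model) (eps : R) (N : nat) : Prop :=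
  has_bracket F eps N /\ forall M, has_bracket F eps M -> (N <= M)%N.

Definition UAsize (UA : nat -> seq (seq A)) : nat := \max_(1 <= h < H.+1) size (UA h).

End Crane.

Arguments pgood {R O A} H fs F beta UA sel k B D.
Arguments episodes {R O A} H fs ps D cont.

(* Main.v *)
Require Import Defs.
From HB Require Import structures.
From mathcomp Require Import all_boot all_order all_algebra.
From mathcomp Require Import all_classical all_reals.
From mathcomp Require Import ereal exp.
From mathcomp Require Import sequences.
From mathcomp Require Import zify ring lra.
Import Order.TTheory GRing.Theory Num.Theory.
Local Open Scope ring_scope.
Local Open Scope classical_set_scope.
Section Chain.
Context {R : realType}.

Lemma sum_tuple_chain (X : finType) (q : seq X -> X -> R) :
  (forall s, \sum_x q s x = 1) -> forall n s,
  \sum_(u : n.-tuple X) \prod_(i < n) q (s ++ take i u) (tnth u i) = 1.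
Proof.
move=> hq; elim=> [|n IH] s.
  under eq_bigr do rewrite big_ord0.
  by rewrite sumr_const card_tuple expn0.
have -> : \sum_(u : n.+1.-tuple X) \prod_(i < n.+1) q (s ++ take i u) (tnth u i)
  = \sum_(x : X) \sum_(u : n.-tuple X)
      \prod_(i < n.+1) q (s ++ take i [tuple of x :: u]) (tnth [tuple of x :: u] i).
  rewrite pair_big /=.
  rewrite (reindex (fun p : X * n.-tuple X => [tuple of p.1 :: p.2])) //.
  apply: onW_bij; exists (fun u : n.+1.-tuple X => (thead u, [tuple of behead u])).
    by case=> x u /=; congr (_, _); apply: val_inj.
  by move=> u /=; rewrite [RHS]tuple_eta.
rewrite -[RHS](hq s); apply: eq_bigr => x _.
under eq_bigr do rewrite big_ord_recl /= cats0.
transitivity (\sum_(u : n.-tuple X) q s x * \prod_(i < n) q (rcons s x ++ take i u) (tnth u i)).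
  apply: eq_bigr => u _; congr (_ * _); apply: eq_bigr => i _.
  by rewrite tnthS add0n cat_rcons.
by rewrite -mulr_sumr IH mulr1.
Qed.


Context {O A : finType}.

Lemma traj_prob_ge0 (H : nat) (f : @model R O A) p (t : traj H) :
  valid_model f -> valid_policy p -> 0 <= traj_prob f p t.
Proof.
move=> vf vp; apply: prodr_ge0 => i _; apply: mulr_ge0.
  exact: (vf _).1.
exact: ((vp _ _).1).
Qed.

Lemma traj_prob_sum (H : nat) (f : @model R O A) p :
  valid_model f -> valid_policy p -> \sum_(t : traj H) traj_prob f p t = 1.
Proof.
move=> vf vp.
pose q := fun (s : seq (O * A)) (x : O * A) => f s x.1 * p s x.1 x.2.
have hq : forall s, \sum_x q s x = 1.
  move=> s; rewrite /q -(pair_big xpredT xpredT (fun o a => f s o * p s o a)) /=.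
  rewrite -(vf s).2; apply: eq_bigr => o _.
  by rewrite -mulr_sumr (vp s o).2 mulr1.
rewrite -(@sum_tuple_chain _ q hq H [::]); apply: eq_bigr => t _; by [].
Qed.

Lemma explore_valid (p : @policy R O A) h u :
  (0 < #|A|)%N -> valid_policy p -> valid_policy (explore p h u).
Proof.
move=> hA vp hst o.
have hu : (forall a : A, 0 <= @unif R A a) /\ \sum_(a : A) @unif R A a = 1.
  split; first by move=> a; rewrite /unif invr_ge0 ler0n.
  rewrite /unif sumr_const -[#|xpredT|]/#|A| -(mulr_natr ((#|A|%:R : R)^-1)) mulVf //.
  by rewrite pnatr_eq0 -lt0n.
rewrite /explore /=.
case hlt: ((size hst).+1 < h)%N; first exact: vp.
case heq: ((size hst).+1 == h); first exact: hu.
case hle: ((size hst).+1 <= h + size u)%N; last exact: hu.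
set j := ((size hst).+1 - h).-1.
have hj : (j < size u)%N.
  rewrite /j; move/negbT: hlt; move/negbT: heq; move: hle.
  set m := (size hst).+1; lia.
clearbody j; case: u hle hj => [|x u'] hle hj; first by [].
have hn : forall a, nth a (x :: u') j = nth x (x :: u') j.
  by move=> a; apply: set_nth_default.
split; first by move=> a; case: ifP.
under eq_bigr do rewrite hn.
by rewrite -big_mkcond /= big_pred1_eq.
Qed.


Lemma expR1_le4 : expR (1 : R) <= 4.
Proof.
have h1 : 1 - 1 / 2 <= expR (- (1 / 2) : R) by exact: expR_ge1Dx.
rewrite expRN in h1.
have hp := expR_gt0 (1 / 2 : R).
set y := expR (1 / 2 : R) in h1 hp *.
have h3 : (1 - 1/2) * y <= 1.
  by rewrite -[X in _ <= X](mulVf (lt0r_neq0 hp)); apply: ler_wpM2r; [exact: ltW hp | exact: h1].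
have -> : (1 : R) = 1/2 + 1/2 by field.
rewrite expRD -/y; nra.
Qed.
End Chain.

Section Main.
Context {R : realType} {O A : finType} (H : nat).
Local Notation trajH := (@traj O A H).
Local Notation datasetH := (@dataset R O A H).
Variables (fs : @model R O A) (F : set (@model R O A)) (N : nat).
Variables (g1 g2 : 'I_N -> @policy R O A -> trajH -> R) (eps : R).
Hypothesis hvF : forall f, F f -> valid_model f.
Hypothesis hFs : F fs.
Hypothesis hb1 : forall i p, valid_policy p -> \sum_(t : trajH) `|g1 i p t - g2 i p t| <= eps.
Hypothesis hb2 : forall f, F f -> exists i : 'I_N, forall p t, valid_policy p ->
        g1 i p t <= traj_prob f p t <= g2 i p t.

Fixpoint allvalid (D : datasetH) : Prop :=
  match D with [::] => True | d :: D' => valid_policy d.1 /\ allvalid D' end.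

Lemma allvalid_rcons D d : allvalid D -> valid_policy d.1 -> allvalid (rcons D d).
Proof. by elim: D => [|e D IH] //= [he hD] hd; split => //; apply: IH. Qed.

Definition Lam (f : model) (D : datasetH) := \prod_(d <- D) traj_prob f d.1 d.2.
Definition inh (i : 'I_N) := `[< exists f, F f /\ forall p t, valid_policy p ->
   g1 i p t <= traj_prob f p t <= g2 i p t >].
Definition G i (D : datasetH) := \prod_(d <- D) g2 i d.1 d.2.
Definition S (D : datasetH) := \sum_(i < N | inh i) G i D.

Lemma Lam_ge0 f D : valid_model f -> allvalid D -> 0 <= Lam f D.
Proof.
move=> vf; elim: D => [|d D IH] /=; first by rewrite /Lam big_nil.
by case=> hd hD; rewrite /Lam big_cons mulr_ge0 //; [exact: traj_prob_ge0 | exact: IH].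
Qed.

Lemma g2_ge0 i p t : inh i -> valid_policy p -> 0 <= g2 i p t.
Proof.
move=> /asboolP [f [hf hfi]] vp; apply: le_trans (@traj_prob_ge0 R O A H f p t (hvF _ hf) vp) _.
by case/andP: (hfi p t vp).
Qed.

Lemma G_ge0 i D : inh i -> allvalid D -> 0 <= G i D.
Proof.
move=> hi; elim: D => [|d D IH] /=; first by rewrite /G big_nil.
by case=> hd hD; rewrite /G big_cons mulr_ge0 //; [exact: g2_ge0 | exact: IH].
Qed.

Lemma S_ge0 D : allvalid D -> 0 <= S D.
Proof. by move=> hD; apply: sumr_ge0 => i hi; exact: G_ge0. Qed.

Lemma Lam_le_G f i D : F f -> (forall p t, valid_policy p ->
    g1 i p t <= traj_prob f p t <= g2 i p t) -> allvalid D -> Lam f D <= G i D.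
Proof.
move=> hf hfi; elim: D => [|d D IH] /=; first by rewrite /Lam /G !big_nil.
case=> hd hD; rewrite /Lam /G !big_cons; apply: ler_pM.
- exact: (@traj_prob_ge0 R O A H f d.1 d.2 (hvF _ hf) hd).
- exact: Lam_ge0 (hvF _ hf) hD.
- by case/andP: (hfi d.1 d.2 hd).
- exact: IH.
Qed.

Lemma sum_g2 i p : inh i -> valid_policy p -> \sum_(t : trajH) g2 i p t <= 1 + eps.
Proof.
move=> hi vp; have [f [hf hfi]] := asboolP _ hi.
have -> : \sum_(t : trajH) g2 i p t =
   \sum_(t : trajH) g1 i p t + \sum_(t : trajH) (g2 i p t - g1 i p t).
  by rewrite -big_split /=; apply: eq_bigr => t _; rewrite addrC subrK.
apply: lerD.
  rewrite -(@traj_prob_sum R O A H f p (hvF _ hf) vp); apply: ler_sum => t _.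
  by case/andP: (hfi p t vp).
apply: le_trans (hb1 i p vp); apply: ler_sum => t _.
by rewrite distrC ler_norm.
Qed.


Lemma eln_mul (x y : R) : 0 <= x -> 0 <= y -> eln (x * y) = (eln x + eln y)%E.
Proof.
rewrite !le_eqVlt => /orP [/eqP <-|hx] /orP [/eqP <-|hy].
- by rewrite mulr0 /eln ltxx.
- by rewrite mul0r /eln ltxx.
- by rewrite mulr0 /eln ltxx addeNy.
rewrite /eln mulr_gt0 // hx hy -EFinD lnM //.
Qed.

Lemma loglik_Lam f D : valid_model f -> allvalid D -> loglik f D = eln (Lam f D).
Proof.
move=> vf; elim: D => [|d D IH] /=.
  by rewrite /loglik /Lam !big_nil /eln ltr01 ln1.
case=> hd hD; rewrite /loglik /Lam !big_cons eln_mul.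
- by rewrite -IH.
- exact: (@traj_prob_ge0 R O A H f d.1 d.2 vf hd).
- exact: Lam_ge0.
Qed.

Lemma fail_bound beta D : allvalid D ->
  Lam fs D - expR (- beta) * S D <= Lam fs D * (if `[< mleB F beta D fs >] then 1 else 0).
Proof.
move=> hD; have hw := expR_gt0 (- beta); have hS := S_ge0 D hD.
case: asboolP => hm.
  by rewrite mulr1 gerBl mulr_ge0 // ltW.
rewrite mulr0 subr_le0.
have := Lam_ge0 fs D (hvF _ hFs) hD; rewrite le_eqVlt => /orP [/eqP <-|hL].
  by rewrite mulr_ge0 // ltW.
set L := Lam fs D in hL *.
have hlt : (loglik fs D < ereal_sup [set loglik g D | g in F] - beta%:E)%E.
  by rewrite ltNge; apply/negP => hle; apply: hm; split.
rewrite (loglik_Lam fs D (hvF _ hFs) hD) -/L /eln hL lteBrDr // in hlt.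
have [y [g hg <-] hy] := ereal_sup_gt hlt.
rewrite (loglik_Lam g D (hvF _ hg) hD) /eln in hy.
move: hy; case: ifP => hLg; last by [].
rewrite lte_fin => hy.
have [i hi] := hb2 g hg.
have hinh : inh i by apply/asboolP; exists g.
have h1 : L * expR beta < Lam g D.
  by rewrite -[L]lnK ?posrE // -expRD -[Lam g D]lnK ?posrE // ltr_expR.
have h2 : Lam g D <= S D.
  apply: le_trans (Lam_le_G g i D hg hi hD) _.
  rewrite /S (bigD1 i) //= lerDl; apply: sumr_ge0 => j /andP [hj _].
  exact: G_ge0.
rewrite -[L](mulfK (lt0r_neq0 (expR_gt0 beta))) -expRN mulrC.
apply: ler_wpM2l; first exact: ltW.
exact: le_trans (ltW h1) h2.
Qed.


Fixpoint allv (ps : seq (@policy R O A)) : Prop :=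
  match ps with [::] => True | p :: ps' => valid_policy p /\ allv ps' end.

Lemma Lam_rcons f D p t : Lam f (rcons D (p, t)) = Lam f D * traj_prob f p t.
Proof. by rewrite /Lam big_rcons. Qed.

Lemma S_rcons D p t : S (rcons D (p, t)) = \sum_(i < N | inh i) G i D * g2 i p t.
Proof. by apply: eq_bigr => i _; rewrite /G big_rcons. Qed.

Lemma ep_bound ps D cont c : allv ps -> allvalid D -> 0 <= c -> 0 <= eps ->
  (forall D', allvalid D' -> Lam fs D' - c * S D' <= Lam fs D' * cont D') ->
  Lam fs D - c * (1 + eps) ^+ (size ps) * S D <= Lam fs D * episodes H fs ps D cont.
Proof.
elim: ps D => [|p ps IH] D /=.
  by move=> _ hD hc _ hcont; rewrite expr0 mulr1; exact: hcont.
case=> vp hps hD hc he hcont.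
set m := size ps.
have key : forall t : trajH, Lam fs D * traj_prob fs p t - c * (1 + eps) ^+ m *
     (\sum_(i < N | inh i) G i D * g2 i p t) <=
   Lam fs D * (traj_prob fs p t * episodes H fs ps (rcons D (p, t)) cont).
  move=> t; have hD' := allvalid_rcons D (p, t) hD vp.
  have := IH (rcons D (p, t)) hps hD' hc he hcont.
  by rewrite Lam_rcons S_rcons mulrA.
rewrite [X in _ <= X]mulr_sumr; apply: le_trans (ler_sum _ (fun t _ => key t)).
rewrite sumrB -mulr_sumr (@traj_prob_sum R O A H fs p (hvF _ hFs) vp) mulr1.
rewrite lerD2l lerN2 -mulr_sumr exprSr -!mulrA; apply: ler_wpM2l => //.
apply: ler_wpM2l; first by apply: exprn_ge0; rewrite addr_ge0.
rewrite exchange_big /= /S mulr_sumr; apply: ler_sum => i hi.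
rewrite -mulr_sumr mulrC; apply: ler_wpM2r; first exact: G_ge0.
exact: sum_g2.
Qed.


Definition Msz (UA : nat -> seq (seq A)) := sumn [seq size (UA h.+1) | h <- iota 0 H].

Lemma size_explore UA (p : @policy R O A) : size (explore_list H UA p) = Msz UA.
Proof. by rewrite /explore_list size_allpairs_dep. Qed.

Lemma allv_cat s1 s2 : allv s1 -> allv s2 -> allv (s1 ++ s2).
Proof. by elim: s1 => [|p s IH] //= [hp hs] h2; split => //; apply: IH. Qed.

Lemma allv_explore UA (p : @policy R O A) : (0 < #|A|)%N -> valid_policy p -> allv (explore_list H UA p).
Proof.
move=> hA vp; rewrite /explore_list; elim: (iota 0 H) => [|h s IH] //=.
apply: allv_cat => //; elim: (UA h.+1) => [|u us IHu] //=; split => //.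
exact: explore_valid.
Qed.

Lemma eqle (x y : R) : x = y -> x <= y.
Proof. by move=> ->. Qed.

Lemma real_step (Lm Sv w rho X : R) (k : nat) : 0 <= Sv -> 0 < w -> 1 <= rho -> 1 <= X ->
  Lm - k.+1%:R * (X * rho) * w * Sv <= Lm - (k%:R * X + 1) * w * rho * Sv.
Proof.
move=> hS hw hr hX; rewrite lerD2l lerN2.
have hk : 0 <= (k%:R : R) by [].
rewrite -natr1.
have h1 : 0 <= w * rho * Sv by rewrite mulr_ge0 // mulr_ge0 // ltW // (lt_le_trans ltr01 hr).
have e1 : (k%:R * X + 1) * w * rho * Sv = (k%:R * X + 1) * (w * rho * Sv) by ring.
have e2 : (k%:R + 1) * (X * rho) * w * Sv = (k%:R * X + X) * (w * rho * Sv) by ring.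
rewrite e1 e2; apply: ler_wpM2r => //; lra.
Qed.

Lemma pgood_bound beta UA sel k : (0 < #|A|)%N -> 0 <= eps ->
  (forall B, valid_policy (sel B).2) ->
  forall B D, allvalid D ->
  Lam fs D * (if `[< B fs >] then 1 else 0)
    - (k.-1)%:R * ((1 + eps) ^+ (Msz UA)) ^+ k * expR (- beta) * S D
  <= Lam fs D * pgood H fs F beta UA sel k B D.
Proof.
move=> hA he hsel; set rho := (1 + eps) ^+ (Msz UA).
have hw := expR_gt0 (- beta).
have hr : 1 <= rho by apply: exprn_ege1; rewrite lerDl.
elim: k => [|k IH] B D hD /=.
  rewrite !mul0r subr0; apply: ler_wpM2l; first exact: Lam_ge0 (hvF _ hFs) hD.
  by case: ifP.
have hL := Lam_ge0 fs D (hvF _ hFs) hD.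
have hS := S_ge0 D hD.
case: ifP => hb; last first.
  rewrite !mulr0 sub0r oppr_le0 mulr_ge0 // mulr_ge0 // ?(ltW hw) //.
  by rewrite mulr_ge0 // exprn_ge0 // (le_trans ler01 hr).
set c' := ((k.-1)%:R * rho ^+ k + (k != 0%N)%:R) * expR (- beta).
have hc' : 0 <= c'.
  rewrite mulr_ge0 ?(ltW hw) // addr_ge0 // mulr_ge0 // exprn_ge0 //.
  exact: le_trans ler01 hr.
have hcont : forall D', allvalid D' -> Lam fs D' - c' * S D' <=
    Lam fs D' * pgood H fs F beta UA sel k (mleB F beta D') D'.
  move=> D' hD'; have hS' := S_ge0 D' hD'.
  case: k IH @c' hc' => [|k] IH c' hc' /=.
  by rewrite /c' /= !mul0r addr0 !mul0r subr0 mulr1.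
  apply: le_trans (IH (mleB F beta D') D' hD').
  have hf := fail_bound beta D' hD'.
  have e : (k%:R * rho ^+ k.+1 + 1) * expR (- beta) * S D' = expR (- beta) * S D' + k%:R * rho ^+ k.+1 * expR (- beta) * S D' by ring.
  by rewrite e opprD addrA lerD2r.
apply: le_trans (ep_bound _ _ _ _ (allv_explore UA _ hA (hsel B)) hD hc' he hcont).
rewrite size_explore -/rho mulr1.
case: k {IH hcont} @c' hc' => [|k] c' hc'.
  by rewrite /c' /= !mul0r add0r !mul0r.
rewrite /c' /=.
have key := @real_step (Lam fs D) (S D) (expR (- beta)) rho (rho ^+ k.+1) k hS hw hr (exprn_ege1 k.+1 hr).
apply: le_trans (le_trans _ key) _; apply: eqle; [by rewrite exprSr | by []].
Qed.

End Main.

Section Arith.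
Context {R : realType}.

Lemma final_arith (K H U N M : nat) (delta Sv : R) :
  (0 < K)%N -> (0 < H)%N -> (0 < U)%N -> (M <= H * U)%N -> 0 < delta <= 1 ->
  0 <= Sv <= N%:R ->
  (K.-1)%:R * ((1 + ((K * H * U)%:R)^-1) ^+ M) ^+ K
    * expR (- (4 * ln ((N * K * H * U)%:R / delta))) * Sv <= delta / 2.
Proof.
move=> hK hH hU hM /andP [hd0 hd1] /andP [hS0 hSN].
case: K hK hM => [|[|k]] // _ hM.
  by rewrite /= !mul0r divr_ge0 // ltW.
set K := k.+2.
set eps : R := ((K * H * U)%:R)^-1.
have hKHU : (0 < K * H * U)%N by rewrite !muln_gt0 hH hU.
have he : 0 <= eps by rewrite invr_ge0.
set rK := ((1 + eps) ^+ M) ^+ K.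
have hrK0 : 0 <= rK by rewrite exprn_ge0 // exprn_ge0 // addr_ge0.
have hrK : rK <= 4.
  rewrite /rK -exprM.
  apply: (@le_trans _ _ (expR eps ^+ (M * K))).
    apply: lerXn2r; [by rewrite nnegrE addr_ge0 | by rewrite nnegrE ltW // expR_gt0 | exact: expR_ge1Dx].
  rewrite -expRM_natl; apply: le_trans expR1_le4; rewrite ler_expR.
  rewrite /eps ler_pdivrMr ?ltr0n // mul1r ler_nat.
  by rewrite mulnC -mulnA leq_mul2l hM orbT.
case: N hSN => [|n] hSN.
  have -> : Sv = 0 by apply/eqP; rewrite eq_le hS0 andbT.
  by rewrite mulr0 divr_ge0 // ltW.
set P : R := (n.+1 * K * H * U)%:R.
have hP1 : (K%:R : R) <= P.
  rewrite /P ler_nat; move: hH hU; rewrite /K; nia.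
set x := P / delta.
have hx : 2 <= x.
  rewrite /x ler_pdivlMr //; apply: le_trans hP1.
  apply: (@le_trans _ _ 2); first by rewrite -[X in _ <= X]mulr1 ler_wpM2l.
  by rewrite /K ler_nat.
have hx0 : 0 < x by apply: lt_le_trans hx.
have hw : expR (- (4 * ln x)) = (x ^+ 4)^-1.
  by rewrite expRN expRM_natl lnK // posrE.
rewrite hw.
set a : R := (k.+1)%:R.
have ha : a * (n.+1)%:R <= P.
  rewrite /a /P -natrM ler_nat; move: hH hU; rewrite /K; nia.
have h1 : a * rK * Sv <= 4 * P.
  apply: (@le_trans _ _ (a * 4 * (n.+1)%:R)).
    by apply: ler_pM => //; [rewrite mulr_ge0 | apply: ler_wpM2l].
  have e : a * 4 * (n.+1)%:R = 4 * (a * (n.+1)%:R) by ring.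
  by rewrite e ler_wpM2l.
have hPx : P = delta * x by rewrite /x mulrC divfK // lt0r_neq0.
have hx3 : 8 <= x ^+ 3.
  have -> : (8 : R) = 2 ^+ 3 by rewrite -natrX.
  by apply: lerXn2r; rewrite ?nnegrE // (le_trans _ hx).
have h2 : 4 * P <= delta * x ^+ 4 / 2.
  rewrite hPx exprSr.
  have hdx : 0 <= delta * x by rewrite mulr_ge0 // ltW.
  have hy : 0 <= (delta * x) * (x ^+ 3 - 8) by rewrite mulr_ge0 // subr_ge0.
  set y := x ^+ 3 in hy *.
  nra.
have hx4 : 0 < x ^+ 4 by rewrite exprn_gt0.
rewrite mulrAC; apply: (@le_trans _ _ (delta * x ^+ 4 / 2 * (x ^+ 4)^-1)).
  apply: ler_wpM2r; [by rewrite invr_ge0 ltW | exact: le_trans h1 h2].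
have hx4n : x ^+ 4 != 0 := lt0r_neq0 hx4.
apply: eqle; field; exact: lt0r_neq0.
Qed.

End Arith.

Lemma Msz_le {A : finType} (H : nat) (UA : nat -> seq (seq A)) :
  (Msz H UA <= H * UAsize H UA)%N.
Proof.
rewrite /Msz.
suff : forall m n, (m + n <= H)%N ->
  (sumn [seq size (UA h.+1) | h <- iota m n] <= n * UAsize H UA)%N.
  by move/(_ 0%N H); rewrite add0n leqnn => /(_ isT).
move=> m n; elim: n m => [|n IH] m //= hmn.
rewrite mulSn leq_add //; last by apply: IH; rewrite addSnnS.
rewrite /UAsize; apply: (@leq_bigmax_seq _ (index_iota 1 H.+1) xpredT (fun h => size (UA h)) m.+1) => //.
by rewrite mem_index_iota; apply/andP; split => //; move: hmn; lia.
Qed.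

Theorem lemma7 (R : realType) :
  exists c : R, 0 < c /\
  forall (O A : finType) (H K : nat) (UA : nat -> seq (seq A))
    (r : nat -> O -> A -> R) (F : set (@model R O A)) (fs : @model R O A)
    (sel : set (@model R O A) -> @model R O A * @policy R O A)
    (delta : R) (N : nat),
    (0 < #|A|)%N -> (0 < H)%N -> (0 < K)%N ->
    (forall h, uniq (UA h)) -> (0 < UAsize H UA)%N ->
    (forall f, F f -> valid_model f) -> F fs ->
    (forall B, valid_policy (sel B).2) ->
    (forall B, (exists fp, is_argmax H r B fp) -> is_argmax H r B (sel B)) ->
    0 < delta <= 1 ->
    bracket_number H F ((K * H * UAsize H UA)%:R)^-1 N ->
    let beta := c * ln ((N * K * H * UAsize H UA)%:R / delta) in
    1 - delta / 2 <= pgood H fs F beta UA sel K F [::].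
Proof.
exists 4; split; first by rewrite ltr0n.
move=> O A H K UA r F fs sel delta N hA hH hK _ hU hvF hFs hsel _ hdelta.
case=> [[g1 [g2 [hb1 hb2]]] _]; cbv zeta.
set eps : R := ((K * H * UAsize H UA)%:R)^-1.
have he : 0 <= eps by rewrite invr_ge0.
have := pgood_bound H fs F N g1 g2 eps hvF hFs hb1 hb2 (4 * ln ((N * K * H * UAsize H UA)%:R / delta)) UA sel K hA he hsel F [::] I.
rewrite /Lam big_nil !mul1r asboolT // => hpg.
apply: le_trans hpg; rewrite lerD2l lerN2.
have hS0 : 0 <= S H F N g1 g2 [::] by apply: S_ge0.
have hSN : S H F N g1 g2 [::] <= N%:R.
  rewrite /S /G; under eq_bigr do rewrite big_nil.
  rewrite big_mkcond /=; apply: (@le_trans _ _ (\sum_(i < N) (1 : R))); last by rewrite sumr_const card_ord.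
  by apply: ler_sum => i _; case: ifP.
apply: final_arith => //; first exact: Msz_le.
by rewrite hS0 hSN.
Qed.
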